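(* Let $r,m,n$ be nonnegative integers. There is a bijection between (A) the set of pairs of partitions $(\alpha,\beta)$ with $\alpha$ nonempty, $|\alpha|+|\beta|=n$, every part of $\beta$ at most $\alpha_1$, $l(\alpha)-l(\beta)=m$, and exactly $r$ balanced parts (i.e. $b(\alpha,\beta)=r$), and (B) the set of strict shifted pairs of partitions $(\bar\alpha,\bar\beta)$ with $|\bar\alpha|+|\bar\beta|=n$ and $l(\bar\alpha)-l(\bar\beta)=m+2r$. The bijection sends $(\alpha,\beta)$ to the pair where $\bar\alpha$ is the partition formed by all parts of $\alpha$ together with all balanced parts of $\beta$, and $\bar\beta$ is formed by the unbalanced parts of $\beta$.
   Context: A partition is a finite nonincreasing sequence $\lambda=(\lambda_1,\dots,\lambda_r)$ of positive integers (possibly empty); $l(\lambda)=r$, $|\lambda|=\sum\lambda_i$, $\lambda_1$ the largest part. A pair of partitions $(\alpha,\beta)$ is strict shifted if $l(\alpha)>l(\beta)$ and $\alpha_{i+1}>\beta_i$ for $1\le i\le l(\beta)$. Balanced parts: let $(\gamma,\delta)$ be a pair of partitions, with the convention $\gamma_j=0$ for $j>l(\gamma)$. The parts $\delta_1,\dots,\delta_{l(\delta)}$ are classified recursively in increasing order of index: $\delta_i$ is balanced if and only if $\gamma_{i+1}\le\delta_i$ and the number of indices $j$ with $2\le j\le l(\gamma)$ and $\gamma_j>\delta_i$ equals the number of indices $j<i$ for which $\delta_j$ is unbalanced; otherwise $\delta_i$ is unbalanced. $b(\gamma,\delta)$ denotes the number of balanced parts of $\delta$. *)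

(* Defs.v *)
From mathcomp Require Import all_boot.
Set Implicit Arguments. Unset Strict Implicit. Unset Printing Implicit Defensive.

Definition is_partition (s : seq nat) : bool :=
  sorted geq s && all (fun x => 0 < x) s.

(* 1-indexed part lambda_j with convention lambda_j = 0 for j > l(lambda). *)
Definition part (s : seq nat) (j : nat) : nat := nth 0 s j.-1.

(* Balanced flags of (gamma, delta): the k-th entry (0-indexed, i.e. the
   part delta_{k+1}) is true iff that part is balanced.  [i] is the
   1-indexed position of the current part, [u] the number of unbalanced
   parts among delta_1 .. delta_{i-1}. *)
Fixpoint bflags_aux (g : seq nat) (i u : nat) (d : seq nat) : seq bool :=
  match d with
  | [::] => [::]
  | x :: d' =>
      let b := (part g i.+1 <= x) &&
               (count (fun y => x < y) (behead g) == u) in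
      b :: bflags_aux g i.+1 (u + ~~ b) d'
  end.

Definition bflags (g d : seq nat) : seq bool := bflags_aux g 1 0 d.

Definition balanced_parts (g d : seq nat) : seq nat := mask (bflags g d) d.
Definition unbalanced_parts (g d : seq nat) : seq nat :=
  mask (map negb (bflags g d)) d.

Definition nbalanced (g d : seq nat) : nat := count id (bflags g d).

Definition strict_shifted (a b : seq nat) : bool :=
  (size b < size a) &&
  all (fun i => part b i < part a i.+1) (iota 1 (size b)).

Definition setA (r m n : nat) (p : seq nat * seq nat) : bool :=
  let: (a, b) := p in
  [&& is_partition a, is_partition b, 0 < size a,
      sumn a + sumn b == n,
      all (fun x => x <= part a 1) b,
      size a == size b + m
    & nbalanced a b == r].

Definition setB (r m n : nat) (p : seq nat * seq nat) : bool :=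
  let: (a, b) := p in
  [&& is_partition a, is_partition b, strict_shifted a b,
      sumn a + sumn b == n
    & size a == size b + (m + 2 * r)].

Definition phi (p : seq nat * seq nat) : seq nat * seq nat :=
  let: (a, b) := p in
  (sort geq (a ++ balanced_parts a b), unbalanced_parts a b).

(* Main.v *)
Require Import Defs.
From mathcomp Require Import all_boot.
From Stdlib Require Import Lia.
Set Implicit Arguments. Unset Strict Implicit. Unset Printing Implicit Defensive.
Ltac nlia := intros;
  repeat match goal with
  | H : is_true (_ <= _) |- _ => move/leP: H => H
  | H : is_true (_ == _) |- _ => move/eqP: H => H
  | H : context [addn] |- _ => rewrite -?plusE in H
  | H : context [subn] |- _ => rewrite -?minusE in H
  | H : context [muln] |- _ => rewrite -?multE in H
  end;
  rewrite -?plusE -?minusE -?multE;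
  lazymatch goal with
  | |- is_true (_ <= _) => apply/leP
  | |- is_true (_ == _) => apply/eqP
  | |- _ => idtac end; lia.

Lemma geq_tr : transitive geq.
Proof. move=> y x z H1 H2; exact: leq_trans H2 H1. Qed.

Lemma nth_mono s i j : sorted geq s -> i <= j -> nth 0 s j <= nth 0 s i.
Proof.
move=> Hs Hij; case: (ltnP j (size s)) => Hj; last by rewrite nth_default.
have Hi : i < size s by apply: leq_ltn_trans Hj.
exact: (sorted_leq_nth geq_tr (fun x => leqnn x) 0 Hs).
Qed.

Lemma sorted_le_head y s z : sorted geq (y :: s) -> z \in s -> z <= y.
Proof. move=> /= /(order_path_min geq_tr) /allP H /H //. Qed.

Lemma count_gt_le s x u : sorted geq s ->
  (count (fun y => x < y) s <= u) = (nth 0 s u <= x).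
Proof.
elim: s u => [|y s IH] u Hs /=; first by rewrite nth_nil.
have Hs' := path_sorted Hs.
have Hc : y <= x -> count (fun y0 => x < y0) s = 0.
  move=> Hyx; apply/eqP; rewrite -leqn0 leqNgt -has_count; apply/hasP => -[z Hz].
  by rewrite ltnNge (leq_trans (sorted_le_head Hs Hz) Hyx).
case: u => [|u] /=.
- case: (ltnP x y) => Hxy /=; first by [].
  by rewrite Hc.
- case: (ltnP x y) => Hxy /=; first by rewrite add1n ltnS IH.
  rewrite Hc // add0n leq0n; symmetry.
  case: (ltnP u (size s)) => Hu; last by rewrite nth_default.
  exact: leq_trans (sorted_le_head Hs (mem_nth 0 Hu)) Hxy.
Qed.

Fixpoint Fk (c : seq nat) (k : nat) (d : seq nat) : seq bool :=
  if d is x :: d' then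
    let b := nth 0 c k <= x in b :: Fk c (k + ~~ b) d'
  else [::].

Lemma size_Fk c k d : size (Fk c k d) = size d.
Proof. by elim: d k => [|x d IH] k //=; rewrite IH. Qed.

Lemma nth_behead (g : seq nat) i : 0 < i -> nth 0 g i = nth 0 (behead g) i.-1.
Proof. by case: g => [|z g]; case: i => [|i] //= _; rewrite !nth_nil. Qed.

Lemma bflags_aux_Fk g i u d : 0 < i ->
  sorted geq (behead g) -> sorted geq d -> u <= i.-1 ->
  (forall x, x \in d -> u <= count (fun y => x < y) (behead g)) ->
  bflags_aux g i u d = Fk (behead g) u d.
Proof.
elim: d i u => [|x d IH] i u Hi0 Hg Hd Hui Hinv //=.
have Hx := Hinv x (mem_head _ _).
have Heq : (count (fun y => x < y) (behead g) == u) = (nth 0 (behead g) u <= x).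
  by rewrite eqn_leq Hx andbT count_gt_le.
have Hb : ((part g i.+1 <= x) && (count (fun y => x < y) (behead g) == u))
          = (nth 0 (behead g) u <= x).
  rewrite Heq; case Hn: (nth 0 (behead g) u <= x); rewrite ?andbF ?andbT //.
  rewrite /part /=; apply: leq_trans Hn.
  rewrite (@nth_behead g i Hi0).
  exact: nth_mono.
rewrite Hb; congr (_ :: _); apply: IH => //.
- exact: path_sorted Hd.
- case: (nth 0 (behead g) u <= x) => /=; nlia.
- move=> z Hz; have Hzx := sorted_le_head Hd Hz.
  have Hmono : count (fun y => x < y) (behead g) <= count (fun y => z < y) (behead g).
    by apply: sub_count => y /= Hy; apply: leq_ltn_trans Hzx Hy.
  case Hn: (nth 0 (behead g) u <= x) => /=.
  + by rewrite addn0 (leq_trans Hx Hmono).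
  + rewrite addn1; apply: leq_trans Hmono.
    by rewrite ltn_neqAle Hx andbT eq_sym Heq Hn.
Qed.

Lemma bflags_Fk g d : sorted geq g -> sorted geq d ->
  bflags g d = Fk (behead g) 0 d.
Proof.
move=> Hg Hd; apply: bflags_aux_Fk => //.
by case: g Hg => //= x g /path_sorted.
Qed.

Lemma Fk_cat c k d1 d2 :
  Fk c k (d1 ++ d2) = Fk c k d1 ++ Fk c (k + count negb (Fk c k d1)) d2.
Proof.
elim: d1 k => [|x d1 IH] k /=; first by rewrite addn0.
by rewrite IH addnA.
Qed.

Lemma Fk_congr c c' K k d :
  (forall j, j < K -> nth 0 c j = nth 0 c' j) ->
  (forall y, y \in d -> (nth 0 c K <= y) = (nth 0 c' K <= y)) ->
  k + count negb (Fk c k d) <= K -> Fk c k d = Fk c' k d.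
Proof.
move=> H1; elim: d k => [|x d IH] k //= H2 Hk.
have HkK : k <= K by apply: leq_trans Hk; apply: leq_addr.
have Hb : (nth 0 c k <= x) = (nth 0 c' k <= x).
  case: (ltngtP k K) HkK => // [/H1 -> //|-> _]; exact: H2 (mem_head _ _).
rewrite -Hb IH //.
- by move=> y Hy; apply: H2; rewrite inE Hy orbT.
- by move: Hk; rewrite addnA.
Qed.

Definition allF (c : seq nat) k (d : seq nat) :=
  forall j, j < size d -> nth 0 d j < nth 0 c (k + j).

Lemma allF_Fk c k d : allF c k d -> Fk c k d = nseq (size d) false.
Proof.
elim: d k => [|x d IH] k //= H.
have Hx := H 0 (ltn0Sn _); rewrite addn0 /= in Hx.
rewrite leqNgt Hx /= IH // => j Hj.
by have := H j.+1 Hj; rewrite /= addn1 addSnnS.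
Qed.

Lemma Fk_allF c k d : Fk c k d = nseq (size d) false -> allF c k d.
Proof.
elim: d k => [|x d IH] k //= H j Hj.
case: H; case Hb: (nth 0 c k <= x) => //= _ H.
case: j Hj => [|j] Hj /=; first by rewrite addn0 ltnNge Hb.
by have := IH _ H j Hj; rewrite /= addn1 addSnnS.
Qed.

Lemma count_nseq_false n : count id (nseq n false) = 0.
Proof. by elim: n. Qed.

Lemma count_negb_nseq n : count negb (nseq n false) = n.
Proof. by elim: n => //= n ->. Qed.

Fixpoint lastp (f : nat -> bool) (n : nat) : nat :=
  if n is n'.+1 then (if f n' then n else lastp f n') else 0.

Lemma lastp_le f n : lastp f n <= n.
Proof. elim: n => //= n IH; case: (f n) => //; exact: leqW. Qed.

Lemma lastp_true f n : 0 < lastp f n -> f (lastp f n).-1.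
Proof. elim: n => //= n IH; case Hf: (f n) => //. Qed.

Lemma lastp_false f n j : lastp f n <= j -> j < n -> ~~ f j.
Proof.
elim: n => //= n IH; case Hf: (f n).
- by move=> H1 H2; move: (leq_trans H1 H2); rewrite ltnn.
- move=> H1; rewrite ltnS leq_eqVlt => /orP [/eqP ->|]; first by rewrite Hf.
  exact: IH.
Qed.

Lemma lastp_uniq (f : nat -> bool) n p : p <= n -> (0 < p -> f p.-1) ->
  (forall j, p <= j -> j < n -> ~~ f j) -> lastp f n = p.
Proof.
elim: n => [|n IH] Hp Ht Hf /=; first by move: Hp; rewrite leqn0 => /eqP.
case: (ltngtP p n.+1) Hp => // [Hlt|Heq] _; last subst p.
- have -> : f n = false by apply/negbTE; apply: Hf => //.
  apply: IH => // j Hj1 Hj2; apply: Hf => //; exact: ltnW.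
- by have /= -> := Ht (ltn0Sn n).
Qed.

Lemma nth_ins (s : seq nat) k x i : k <= size s ->
  nth 0 (take k s ++ x :: drop k s) i =
  if i < k then nth 0 s i else if i == k then x else nth 0 s i.-1.
Proof.
move=> Hk; rewrite nth_cat size_takel //.
case: (ltnP i k) => Hik; first by rewrite nth_take.
case: (eqVneq i k) => [->|Hne]; first by rewrite subnn.
have Hgt : k < i by rewrite ltn_neqAle eq_sym Hne Hik.
have -> : i - k = (i - k).-1.+1 by rewrite prednK // subn_gt0.
rewrite /= nth_drop; congr nth; nlia.
Qed.

Lemma nth_rem (s : seq nat) k i :
  nth 0 (take k s ++ drop k.+1 s) i = if i < k then nth 0 s i else nth 0 s i.+1.
Proof.
case: (leqP k (size s)) => Hk.
- rewrite nth_cat size_takel //.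
  case: (ltnP i k) => Hik; first by rewrite nth_take.
  rewrite nth_drop; congr nth; nlia.
- have Hk2 : size s <= k.+1 by nlia.
  rewrite take_oversize ?(ltnW Hk) // drop_oversize // cats0.
  case: (ltnP i k) => Hik //.
  rewrite !nth_default //; nlia.
Qed.

Lemma perm_ins (s : seq nat) k x : perm_eq (take k s ++ x :: drop k s) (x :: s).
Proof.
have /= -> := perm_catCA (take k s) [:: x] (drop k s) (x :: s).
by rewrite cat_take_drop perm_refl.
Qed.

Lemma perm_rem (s : seq nat) k : k < size s ->
  perm_eq (nth 0 s k :: (take k s ++ drop k.+1 s)) s.
Proof.
move=> Hk.
have /= H := perm_catCA (take k s) [:: nth 0 s k] (drop k.+1 s) s.
by rewrite -(drop_nth 0 Hk) cat_take_drop perm_refl in H; rewrite -H.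
Qed.

Lemma sorted_ins s k x : sorted geq s -> (0 < k -> x <= nth 0 s k.-1) ->
  nth 0 s k <= x -> sorted geq (take k s ++ x :: drop k s).
Proof.
elim: s k => [|y s IH] k Hs H1 H2; first by [].
case: k H1 H2 => [|k] H1 H2 /=; first by apply/andP.
rewrite (path_sortedE geq_tr); apply/andP; split.
- rewrite (perm_all _ (perm_ins s k x)) /=; apply/andP; split.
  + apply: leq_trans (H1 isT) _; rewrite /=.
    exact: nth_mono Hs (leq0n k).
  + by move: Hs; rewrite /= (path_sortedE geq_tr) => /andP [].
- apply: IH => //; first exact: path_sorted Hs.
  case: k H1 {H2} => // k H1 _; exact: H1.
Qed.

Lemma sorted_rem s k : sorted geq s -> sorted geq (take k s ++ drop k.+1 s).
Proof.
move=> Hs; apply: (subseq_sorted geq_tr _ Hs).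
by rewrite -{3}(cat_take_drop k s) subseq_cat2l -add1n -drop_drop drop_subseq.
Qed.

Lemma Fk_last c k d x : (forall z, z \in d -> x <= z) ->
  0 < count negb (Fk c k d) -> x < nth 0 c (k + count negb (Fk c k d)).-1.
Proof.
elim: d k => [|y d IH] k //= Hx.
have Hy := Hx y (mem_head _ _).
have Hd : forall z, z \in d -> x <= z by move=> z Hz; apply: Hx; rewrite inE Hz orbT.
case Hb: (nth 0 c k <= y); cbn [nat_of_bool negb].
- rewrite addn0 add0n => H; exact: IH.
- rewrite add1n addn1 => _.
  case: (posnP (count negb (Fk c k.+1 d))) => [->|Hp].
  + by rewrite addn1 /=; apply: leq_ltn_trans Hy _; rewrite ltnNge Hb.
  + by rewrite -addSnnS; apply: IH.
Qed.

Lemma Fk_flag c k b j : j < size b ->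
  nth false (Fk c k b) j = (nth 0 c (k + count negb (Fk c k (take j b))) <= nth 0 b j).
Proof.
move=> Hj; rewrite -{1}(cat_take_drop j b) Fk_cat (drop_nth 0 Hj) nth_cat size_Fk.
by rewrite size_takel ?(ltnW Hj) // ltnn subnn.
Qed.

Lemma all_false_nseq (l : seq bool) :
  (forall j, j < size l -> ~~ nth false l j) -> l = nseq (size l) false.
Proof.
elim: l => //= x l IH H; have /= Hx := H 0 isT.
rewrite (negbTE Hx) -IH // => j Hj; exact: (H j.+1).
Qed.

Section Dec.
Variables (c b : seq nat).
Let fl := Fk c 0 b.
Let s := lastp (nth false fl) (size b).
Let k := count negb (Fk c 0 (take s b)).

Lemma dec_le : s <= size b.
Proof. exact: lastp_le. Qed.

Lemma dec_cat : Fk c 0 b = Fk c 0 (take s b) ++ Fk c k (drop s b).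
Proof. by rewrite -{1}(cat_take_drop s b) Fk_cat. Qed.

Lemma dec_nseq : Fk c k (drop s b) = nseq (size b - s) false.
Proof.
rewrite -size_drop -(size_Fk c k); apply: all_false_nseq => j.
rewrite size_Fk size_drop => Hj.
have := @lastp_false (nth false fl) (size b) (s + j) (leq_addr _ _).
rewrite /fl dec_cat nth_cat size_Fk size_takel ?dec_le //.
rewrite [s + j < s]ltnNge leq_addr addKn; apply; nlia.
Qed.

Lemma dec_allF : allF c k (drop s b).
Proof. apply: Fk_allF; by rewrite dec_nseq size_drop. Qed.

Lemma dec_last : 0 < s ->
  nth 0 c (count negb (Fk c 0 (take s.-1 b))) <= nth 0 b s.-1 /\
  count negb (Fk c 0 (take s.-1 b)) = k.
Proof.
move=> Hs.
have Hsb : s.-1 < size b by rewrite prednK // dec_le.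
have Hfl := @lastp_true (nth false fl) (size b) Hs.
rewrite /fl Fk_flag // add0n in Hfl; split => //.
rewrite /k; have -> : take s b = rcons (take s.-1 b) (nth 0 b s.-1) by rewrite -take_nth // prednK.
rewrite -cats1 Fk_cat count_cat /= add0n Hfl /=.
by rewrite !addn0.
Qed.

End Dec.

Definition psi (p : seq nat * seq nat) : seq nat * seq nat :=
  let: (a, b) := p in
  let c := behead a in
  let s := lastp (nth false (Fk c 0 b)) (size b) in
  let k := count negb (Fk c 0 (take s.-1 b)) in
  (head 0 a :: (take k c ++ nth 0 b s.-1 :: drop k c), take s.-1 b ++ drop s b).

Definition chi (p : seq nat * seq nat) : seq nat * seq nat :=
  let: (a, b) := p in
  let c := behead a in
  let s := lastp (nth false (Fk c 0 b)) (size b) in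
  let k := count negb (Fk c 0 (take s b)) in
  let u := drop s b in
  let q := lastp (fun j => nth 0 c (k + j.+1) <= nth 0 u j) (size u) in
  (head 0 a :: (take (k + q) c ++ drop (k + q).+1 c),
   take (s + q) b ++ nth 0 c (k + q) :: drop (s + q) b).

Lemma take_ge_nth (b : seq nat) t z : sorted geq b -> z \in take t b -> nth 0 b t <= z.
Proof.
move=> Hb /(nthP 0) [i Hi <-]; rewrite size_take_min in Hi.
have Hit : i < t by apply: leq_trans Hi (geq_minl _ _).
by rewrite nth_take //; apply: nth_mono Hb (ltnW Hit).
Qed.

Lemma mem_pos (c : seq nat) j : all (fun x => 0 < x) c -> 0 < nth 0 c j -> j < size c.
Proof. by move=> _ H; rewrite ltnNge; apply/negP => /(nth_default 0); move=> E; rewrite E in H. Qed.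

Lemma geq_total : total geq.
Proof. by move=> x y; rewrite /= orbC leq_total. Qed.

Lemma geq_anti : antisymmetric geq.
Proof. by move=> x y /= H; apply: anti_leq; rewrite andbC. Qed.

Lemma phi_gen (a0 : nat) c c' b d1 x u F1 n :
  b = d1 ++ x :: u -> size F1 = size d1 -> size u = n -> perm_eq c' (x :: c) ->
  bflags (a0 :: c) b = F1 ++ true :: nseq n false ->
  bflags (a0 :: c') (d1 ++ u) = F1 ++ nseq n false ->
  phi (a0 :: c', d1 ++ u) = phi (a0 :: c, b).
Proof.
move=> -> HF Hu Hp E1 E2; rewrite /phi /balanced_parts /unbalanced_parts E1 E2.
rewrite !map_cat !mask_cat ?size_map //= !mask_false.
congr pair.
apply/(@perm_sortP nat geq geq_total geq_tr geq_anti).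
rewrite /= perm_cons cats0.
apply: (@perm_trans _ (x :: c ++ mask F1 d1)).
- by rewrite -cat_cons perm_cat2r.
- by rewrite catA cats1 perm_sym perm_rcons.
Qed.

Lemma drop_ins (c : seq nat) k x : k <= size c ->
  drop k.+1 (take k c ++ x :: drop k c) = drop k c.
Proof. by move=> Hk; rewrite -cat_rcons drop_size_cat // size_rcons size_takel. Qed.

Section Psi.
Variables (a0 : nat) (c b : seq nat).
Hypotheses (Hsa : sorted geq (a0 :: c)) (Hpa : all (fun x => 0 < x) (a0 :: c))
  (Hsb : sorted geq b) (Hpb : all (fun x => 0 < x) b)
  (Hba : all (fun x => x <= a0) b) (Hr : 0 < count id (Fk c 0 b)).

Local Notation s := (lastp (nth false (Fk c 0 b)) (size b)).
Local Notation t := s.-1.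
Local Notation k := (count negb (Fk c 0 (take s.-1 b))).
Local Notation x := (nth 0 b s.-1).
Local Notation c' := (take k c ++ x :: drop k c).

Lemma psi_s_pos : 0 < s.
Proof.
rewrite lt0n; apply/negP => /eqP Hs.
move: Hr; rewrite dec_cat dec_nseq Hs take0 /= count_nseq_false //.
Qed.

Lemma psi_t_lt : t < size b.
Proof. by rewrite prednK ?psi_s_pos ?dec_le. Qed.

Lemma psi_b : b = take t b ++ x :: drop s b.
Proof.
have E : drop s b = drop t.+1 b by rewrite prednK // psi_s_pos.
by rewrite E -drop_nth ?psi_t_lt // cat_take_drop.
Qed.

Lemma psi_fl : Fk c 0 b = Fk c 0 (take t b) ++ true :: nseq (size b - s) false.
Proof.
have [H1 H2] := dec_last psi_s_pos.
rewrite {1}psi_b Fk_cat /= add0n H1 /= addn0.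
by rewrite H2 dec_nseq.
Qed.

Lemma psi_k_eq : count negb (Fk c 0 (take s b)) = k.
Proof. by have [_ ->] := dec_last psi_s_pos. Qed.

Lemma psi_allF : allF c k (drop s b).
Proof. by rewrite -psi_k_eq; apply: dec_allF. Qed.

Lemma psi_x_mem : x \in b.
Proof. exact: mem_nth psi_t_lt. Qed.

Lemma psi_x_pos : 0 < x.
Proof. exact: (allP Hpb _ psi_x_mem). Qed.

Lemma psi_x_le : x <= a0.
Proof. exact: (allP Hba _ psi_x_mem). Qed.

Lemma psi_x_ck : nth 0 c k <= x.
Proof. by have [-> _] := dec_last psi_s_pos. Qed.

Lemma psi_sc : sorted geq c.
Proof. exact: path_sorted Hsa. Qed.

Lemma psi_k : 0 < k -> x < nth 0 c k.-1.
Proof.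
move=> Hk; have := @Fk_last c 0 (take t b) x (fun z Hz => take_ge_nth Hsb Hz) Hk.
by rewrite add0n.
Qed.

Lemma psi_k_le : k <= size c.
Proof.
case: (posnP k) => [->//|Hk].
have Hp : 0 < nth 0 c k.-1 by apply: leq_ltn_trans (psi_k Hk).
by rewrite -(prednK Hk); apply: mem_pos Hp; case/andP: Hpa.
Qed.

Lemma psi_sorted_c' : sorted geq c'.
Proof.
apply: sorted_ins psi_sc _ psi_x_ck.
by move=> Hk; apply: ltnW; apply: psi_k.
Qed.

Lemma psi_sorted_a' : sorted geq (a0 :: c').
Proof.
rewrite /= (path_sortedE geq_tr) psi_sorted_c' andbT.
rewrite (perm_all _ (perm_ins c k x)) /= psi_x_le /=.
by move: Hsa; rewrite /= (path_sortedE geq_tr) => /andP [].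
Qed.

Lemma psi_sorted_b' : sorted geq (take t b ++ drop s b).
Proof.
have -> : drop s b = drop t.+1 b by rewrite prednK // psi_s_pos.
exact: sorted_rem.
Qed.

Lemma psi_nth_ge j : nth 0 c j <= nth 0 c' j.
Proof.
rewrite nth_ins ?psi_k_le //.
case: (ltnP j k) => // Hjk; case: (eqVneq j k) => [->|Hne]; first exact: psi_x_ck.
apply: nth_mono psi_sc _; exact: leq_pred.
Qed.

Lemma psi_Fk' : Fk c' 0 (take t b ++ drop s b) =
  Fk c 0 (take t b) ++ nseq (size b - s) false.
Proof.
have E1 : Fk c 0 (take t b) = Fk c' 0 (take t b).
  apply: (@Fk_congr c c' k) => //.
  - by move=> j Hj; rewrite nth_ins ?psi_k_le // Hj.
  - move=> y Hy; rewrite nth_ins ?psi_k_le // ltnn eqxx.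
    have Hxy := take_ge_nth Hsb Hy.
    by rewrite Hxy (leq_trans psi_x_ck Hxy).
rewrite Fk_cat -E1 add0n; congr (_ ++ _).
rewrite -size_drop; apply: allF_Fk => j Hj.
apply: leq_trans (psi_allF Hj) _; exact: psi_nth_ge.
Qed.

Lemma psi_count : count id (Fk c' 0 (take t b ++ drop s b)) = (count id (Fk c 0 b)).-1.
Proof. rewrite psi_Fk' [in RHS]psi_fl !count_cat /= !count_nseq_false; nlia. Qed.

Lemma psi_phi : phi (a0 :: c', take t b ++ drop s b) = phi (a0 :: c, b).
Proof.
apply: (phi_gen (F1 := Fk c 0 (take t b)) (n := size b - s) psi_b).
- by rewrite size_Fk.
- by rewrite size_drop.
- exact: perm_ins.
- by rewrite bflags_Fk //; exact: psi_fl.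
- by rewrite bflags_Fk ?psi_sorted_a' ?psi_sorted_b' //= psi_Fk'.
Qed.

Lemma size_b' : size (take t b ++ drop s b) = (size b).-1.
Proof.
rewrite size_cat size_takel ?size_drop; last exact: ltnW psi_t_lt.
have H1 := psi_t_lt; have H2 := psi_s_pos; nlia.
Qed.

Lemma chi_psi : chi (a0 :: c', take t b ++ drop s b) = (a0 :: c, b).
Proof.
rewrite /chi /=.
set b' := take t b ++ drop s b.
pose F1 := Fk c 0 (take t b).
have EF : Fk c' 0 b' = F1 ++ nseq (size b - s) false by exact: psi_Fk'.
have HF1 : size F1 = t by rewrite size_Fk size_takel // ltnW // psi_t_lt.
have Htb : t <= size b' by rewrite size_b'; have H1 := psi_t_lt; nlia.
set s' := lastp (nth false (Fk c' 0 b')) (size b').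
have Hs't : s' <= t.
  rewrite leqNgt; apply/negP => Hlt.
  have Hp : 0 < s' by apply: leq_ltn_trans Hlt.
  have := lastp_true Hp; rewrite -/s' EF nth_cat HF1.
  have -> : (s'.-1 < t) = false by apply/negbTE; rewrite -leqNgt; nlia.
  by rewrite nth_nseq if_same.
have HF1f : forall j, s' <= j -> j < t -> ~~ nth false F1 j.
  move=> j H1 H2; have := @lastp_false _ (size b') j H1 (leq_trans H2 Htb).
  by rewrite EF nth_cat HF1 H2.
set k' := count negb (Fk c' 0 (take s' b')).
have Ek' : Fk c' 0 (take s' b') = take s' F1.
  have E2 := dec_cat c' b'; rewrite -/s' EF in E2.
  have Hs'b : s' <= size b' := leq_trans Hs't Htb.
  have := congr1 (take s') (esym E2).
  rewrite take_size_cat; last by rewrite size_Fk size_takel.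
  move=> ->; rewrite take_cat HF1; case: (ltnP s' t) => // Hge.
  have Eq : s' = t by apply/eqP; rewrite eqn_leq Hs't Hge.
  by rewrite Eq subnn take0 cats0 -HF1 take_size.
have Hkk : k' + (t - s') = k.
  rewrite /k' Ek' -/F1 -{2}(cat_take_drop s' F1) count_cat; congr (_ + _).
  have Hd : drop s' F1 = nseq (t - s') false.
    rewrite -HF1 -size_drop; apply: all_false_nseq => j.
    rewrite size_drop HF1 nth_drop => Hj; apply: HF1f; nlia.
  by rewrite Hd count_negb_nseq.
have Hk := psi_k_le.
have Hnx : nth 0 c' k = x by rewrite nth_ins // ltnn eqxx.
have Hszb' : size b' = t + size (drop s b).
  rewrite /b' size_cat size_takel //; exact: ltnW psi_t_lt.
set q := lastp (fun j => nth 0 c' (k' + j.+1) <= nth 0 (drop s' b') j)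
                (size (drop s' b')).
have Hq : q = t - s'.
  apply: lastp_uniq.
  - rewrite size_drop; nlia.
  - move=> Hp; rewrite prednK // Hkk Hnx nth_drop.
    have -> : s' + (t - s').-1 = t.-1 by nlia.
    rewrite /b' nth_cat size_takel ?(ltnW psi_t_lt) //.
    have Ht0 : 0 < t by nlia.
    have Htt : t.-1 < t by nlia.
    rewrite Htt nth_take //.
    by apply: nth_mono Hsb _; exact: leq_pred.
  - move=> j Hj1; rewrite size_drop Hszb' => Hj2.
    rewrite -ltnNge nth_drop.
    have E1 : k' + j.+1 = (k + (j - (t - s'))).+1 by nlia.
    have E2 : s' + j = t + (j - (t - s')) by nlia.
    set i := j - (t - s').
    have G1 : ((k + i).+1 < k) = false by apply/negbTE; rewrite -leqNgt; nlia.
    have G2 : ((k + i).+1 == k) = false by apply: gtn_eqF; nlia.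
    rewrite E1 E2 nth_ins // G1 G2 /=.
    rewrite nth_cat size_takel ?(ltnW psi_t_lt) // [t + _ < t]ltnNge leq_addr /= addKn.
    apply: psi_allF; nlia.
rewrite Hq Hkk (subnKC Hs't) Hnx drop_ins // take_size_cat ?size_takel //.
rewrite cat_take_drop /b' take_size_cat ?size_takel ?(ltnW psi_t_lt) //.
by rewrite drop_size_cat ?size_takel ?(ltnW psi_t_lt) // -psi_b.
Qed.

End Psi.

Section Chi.
Variables (a0 : nat) (c b : seq nat).
Hypotheses (Hsa : sorted geq (a0 :: c)) (Hpa : all (fun x => 0 < x) (a0 :: c))
  (Hsb : sorted geq b) (Hpb : all (fun x => 0 < x) b)
  (Hba : all (fun x => x <= a0) b) (Hsz : size b < size c).

Local Notation s := (lastp (nth false (Fk c 0 b)) (size b)).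
Local Notation k := (count negb (Fk c 0 (take s b))).
Local Notation u := (drop s b).
Local Notation q := (lastp (fun j => nth 0 c (k + j.+1) <= nth 0 u j) (size u)).
Local Notation N := (k + q).
Local Notation x := (nth 0 c N).
Local Notation c' := (take N c ++ drop N.+1 c).
Local Notation b' := (take (s + q) b ++ x :: drop (s + q) b).

Lemma chi_sc : sorted geq c.
Proof. exact: path_sorted Hsa. Qed.

Lemma chi_allF : allF c k u.
Proof. exact: dec_allF. Qed.

Lemma chi_fl : Fk c 0 b = Fk c 0 (take s b) ++ nseq (size b - s) false.
Proof. by rewrite [in LHS]dec_cat dec_nseq. Qed.

Lemma chi_s_le : s <= size b.
Proof. exact: dec_le. Qed.

Lemma chi_k_le : k <= s.
Proof. by apply: leq_trans (count_size _ _) _; rewrite size_Fk size_takel // chi_s_le. Qed.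

Lemma chi_q_le : q <= size u.
Proof. exact: lastp_le. Qed.

Lemma chi_sq_le : s + q <= size b.
Proof. have := chi_q_le; rewrite size_drop; have := chi_s_le; nlia. Qed.

Lemma chi_N_lt : N < size c.
Proof. have H3 := Hsz; have := chi_sq_le; have := chi_k_le; nlia. Qed.

Lemma chi_x_mem : x \in c.
Proof. exact: mem_nth chi_N_lt. Qed.

Lemma chi_x_pos : 0 < x.
Proof. by move: Hpa => /= /andP [_ /allP]; apply; exact: chi_x_mem. Qed.

Lemma chi_x_le : x <= a0.
Proof. by move: Hsa => /= /(order_path_min geq_tr) /allP; apply; exact: chi_x_mem. Qed.

Lemma chi_hd y : y \in take s b -> nth 0 c k <= y.
Proof.
case: (posnP s) => [->|Hs]; first by rewrite take0.
move=> Hy; have [H1 H2] := dec_last Hs.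
rewrite -H2; apply: leq_trans H1 _.
have Hy2 : y \in take s.-1.+1 b by rewrite prednK.
move: Hy2 => /(nthP 0) [i Hi <-]; rewrite size_take_min in Hi.
have Hit : i < s.-1.+1 by apply: leq_trans Hi (geq_minl _ _).
by rewrite nth_take //; apply: nth_mono Hsb _; rewrite -ltnS.
Qed.

Lemma chi_ins_hi : nth 0 b (s + q) <= x.
Proof.
case: (ltnP q (size u)) => Hq.
- have := chi_allF Hq; rewrite nth_drop => H; exact: ltnW.
- by rewrite nth_default //; move: Hq; rewrite size_drop; have := chi_s_le; nlia.
Qed.

Lemma chi_ins_lo : 0 < s + q -> x <= nth 0 b (s + q).-1.
Proof.
case: (posnP q) => [Hq0|Hq].
- rewrite Hq0 !addn0 => Hs; have [H1 H2] := dec_last Hs.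
  by rewrite H2 in H1.
- move=> _; have := lastp_true Hq; rewrite prednK // nth_drop.
  by have -> : s + q.-1 = (s + q).-1 by nlia.
Qed.

Lemma chi_sorted_b' : sorted geq b'.
Proof. exact: sorted_ins Hsb chi_ins_lo chi_ins_hi. Qed.

Lemma chi_sorted_a' : sorted geq (a0 :: c').
Proof.
rewrite /= (path_sortedE geq_tr) sorted_rem ?chi_sc // andbT.
have := perm_all (fun y => y <= a0) (perm_rem chi_N_lt).
rewrite /= chi_x_le /= => ->.
by move: Hsa; rewrite /= (path_sortedE geq_tr) => /andP [].
Qed.

Lemma chi_b' : b' = take s b ++ (take q u ++ x :: drop q u).
Proof. by rewrite takeD -catA drop_drop (addnC q s). Qed.

Lemma chi_Fk' : Fk c' 0 b' =
  Fk c 0 (take s b) ++ (nseq q false ++ true :: nseq (size u - q) false).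
Proof.
have HN := chi_N_lt.
have E1 : Fk c 0 (take s b) = Fk c' 0 (take s b).
  apply: (@Fk_congr c c' k) => //.
  - by move=> j Hj; rewrite nth_rem (leq_trans Hj (leq_addr _ _)).
  - move=> y Hy; have Hy' := chi_hd Hy; rewrite Hy'; symmetry.
    apply: leq_trans Hy'; rewrite nth_rem; case: ifP => // _.
    exact: nth_mono chi_sc (leqnSn _).
rewrite chi_b' Fk_cat -E1 add0n Fk_cat.
have Hq := chi_q_le.
have E2 : Fk c' k (take q u) = nseq q false.
  have := @allF_Fk c' k (take q u); rewrite size_takel //; apply => j.
  rewrite size_takel // => Hj.
  rewrite nth_take // nth_rem.
  have -> : k + j < N by rewrite ltn_add2l.
  exact: chi_allF (leq_trans Hj Hq).
rewrite E2 count_negb_nseq /= nth_rem ltnn.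
have -> : nth 0 c N.+1 <= x by exact: nth_mono chi_sc (leqnSn _).
congr (_ ++ (_ ++ true :: _)); rewrite addn0.
suff H : allF c' N (drop q u) by rewrite (allF_Fk H) (size_drop q u).
move=> j; rewrite (size_drop q u) => Hj.
rewrite nth_drop nth_rem [N + j < N]ltnNge leq_addr /=.
have := @lastp_false (fun j => nth 0 c (k + j.+1) <= nth 0 u j) (size u) (q + j)
  (leq_addr _ _) ltac:(nlia).
by rewrite -ltnNge addnS addnA.
Qed.

Lemma chi_count : count id (Fk c' 0 b') = (count id (Fk c 0 b)).+1.
Proof. rewrite chi_Fk' [in RHS]chi_fl !count_cat /= !count_nseq_false; nlia. Qed.

Lemma psi_chi : psi (a0 :: c', b') = (a0 :: c, b).
Proof.
rewrite /psi /=.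
have Hsq := chi_sq_le.
have HN := chi_N_lt.
have EF := chi_Fk'.
have HP : size (Fk c 0 (take s b)) = s by rewrite size_Fk size_takel // chi_s_le.
have Hsz' : size b' = (size b).+1.
  by rewrite size_cat size_takel //= (size_drop (s + q) b); nlia.
have Htb : take (s + q) b' = take (s + q) b by rewrite take_size_cat ?size_takel.
have Hs2 : lastp (nth false (Fk c' 0 b')) (size b') = (s + q).+1.
  apply: lastp_uniq.
  - by rewrite Hsz'.
  - move=> _ /=; rewrite EF nth_cat HP ltnNge leq_addr /= addKn.
    by rewrite nth_cat size_nseq ltnn subnn.
  - move=> j Hj1 Hj2; rewrite EF nth_cat HP.
    have -> : (j < s) = false by apply/negbTE; rewrite -leqNgt; nlia.
    rewrite nth_cat size_nseq.
    have -> : (j - s < q) = false by apply/negbTE; rewrite -leqNgt; nlia.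
    have -> : j - s - q = (j - s - q).-1.+1 by rewrite prednK //; nlia.
    by rewrite /= nth_nseq if_same.
rewrite Hs2 /= Htb.
have Hk2 : count negb (Fk c' 0 (take (s + q) b)) = N.
  have E1 : take (s + q) (Fk c' 0 b') = Fk c' 0 (take (s + q) b).
    by rewrite Fk_cat take_size_cat // size_Fk size_takel.
  rewrite -E1 EF catA take_size_cat; last by rewrite size_cat HP size_nseq.
  by rewrite count_cat count_negb_nseq.
rewrite Hk2 nth_cat size_takel // ltnn subnn /= drop_ins //.
rewrite take_size_cat ?size_takel ?(ltnW HN) //.
rewrite -cat_rcons drop_size_cat ?size_rcons ?size_takel ?(ltnW HN) //.
by rewrite cat_rcons -drop_nth // !cat_take_drop.
Qed.

End Chi.

Definition posl (s : seq nat) := all (fun x => 0 < x) s.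

Lemma setA_inv r m n a b : setA r m n (a, b) ->
  exists a0 c, a = a0 :: c /\ [/\ sorted geq (a0 :: c), posl (a0 :: c),
    sorted geq b, posl b & all (fun x => x <= a0) b] /\
    [/\ sumn a + sumn b = n, size a = size b + m &
        count id (Fk c 0 b) = r].
Proof.
case: a => [|a0 c] /=; first by rewrite /setA /= !andbF.
rewrite /setA /is_partition /nbalanced.
move=> /and5P [/andP [Hs Hp] /andP [Hsb Hpb] Hn Hall /andP [/eqP Hsz /eqP Hr]].
exists a0, c; split => //; split => //; split => //; first exact/eqP.
by rewrite -Hr bflags_Fk.
Qed.

Lemma setA_intro r m n a0 c b : sorted geq (a0 :: c) -> posl (a0 :: c) ->
  sorted geq b -> posl b -> all (fun x => x <= a0) b ->
  sumn (a0 :: c) + sumn b = n -> size (a0 :: c) = size b + m ->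
  count id (Fk c 0 b) = r -> setA r m n (a0 :: c, b).
Proof.
move=> Hs Hp Hsb Hpb Hall Hn Hsz Hr.
rewrite /setA /is_partition /nbalanced bflags_Fk //.
apply/and5P; split; try by apply/andP.
all: try by apply/eqP.
apply/and3P; split => //; apply/eqP => //.

Qed.

Lemma psi_setA r m n a b : setA r.+1 m n (a, b) ->
  [/\ setA r (m + 2) n (psi (a, b)), phi (psi (a, b)) = phi (a, b)
    & chi (psi (a, b)) = (a, b)].
Proof.
move/setA_inv => [a0 [c [-> [[Hs Hp Hsb Hpb Hall] [Hn Hsz Hr]]]]].
rewrite /= in Hsz; rewrite /posl in Hp Hpb.
have Hr' : 0 < count id (Fk c 0 b) by rewrite Hr.
have Hpc : all (fun x => 0 < x) c by case/andP: Hp.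
have Pc := perm_ins c (count negb (Fk c 0 (take (lastp (nth false (Fk c 0 b)) (size b)).-1 b)))
   (nth 0 b (lastp (nth false (Fk c 0 b)) (size b)).-1).
have Pb : perm_eq (nth 0 b (lastp (nth false (Fk c 0 b)) (size b)).-1 ::
   (take (lastp (nth false (Fk c 0 b)) (size b)).-1 b ++ drop (lastp (nth false (Fk c 0 b)) (size b)) b)) b.
  have E : drop (lastp (nth false (Fk c 0 b)) (size b)) b =
           drop (lastp (nth false (Fk c 0 b)) (size b)).-1.+1 b.
    by rewrite prednK // psi_s_pos.
  by rewrite E; apply: perm_rem; apply: psi_t_lt.
split.
- rewrite /psi /=; apply: setA_intro.
  + exact: psi_sorted_a'.
  + rewrite /posl /= (perm_all _ Pc) /=.
    by rewrite (psi_x_pos Hpb Hr') Hpc; case/andP: Hp => ->.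
  + exact: psi_sorted_b'.
  + by move: Hpb; rewrite /posl -(perm_all _ Pb) => /andP [].
  + by move: Hall; rewrite -(perm_all _ Pb) => /andP [].
  + rewrite -Hn /= (perm_sumn Pc) -(perm_sumn Pb) /=; nlia.
  + rewrite /= (perm_size Pc) /=; have Hb := perm_size Pb; rewrite /= in Hb; nlia.
  + by rewrite (@psi_count a0 c b Hs Hp Hsb Hr') Hr.
- rewrite /psi /=; exact: psi_phi.
- rewrite /psi /=; exact: chi_psi.
Qed.

Lemma chi_setA r m n a b : setA r (m + 2) n (a, b) ->
  setA r.+1 m n (chi (a, b)) /\ psi (chi (a, b)) = (a, b).
Proof.
move/setA_inv => [a0 [c [-> [[Hs Hp Hsb Hpb Hall] [Hn Hsz Hr]]]]].
have Hpc : all (fun x => 0 < x) c by case/andP: Hp.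
rewrite /= in Hsz; rewrite /posl in Hp Hpb.
have Hsz2 : size b < size c by move: Hsz => /= ; nlia.
set s := lastp (nth false (Fk c 0 b)) (size b).
set k := count negb (Fk c 0 (take s b)).
set q := lastp (fun j => nth 0 c (k + j.+1) <= nth 0 (drop s b) j) (size (drop s b)).
have Pc : perm_eq (nth 0 c (k + q) :: (take (k + q) c ++ drop (k + q).+1 c)) c :=
  perm_rem (@chi_N_lt c b Hsz2).
have Pb := perm_ins b (s + q) (nth 0 c (k + q)).
split.
- rewrite /chi /= -/s -/k -/q; apply: setA_intro.
  + by apply: (@chi_sorted_a' a0 c b).
  + move: Hp; rewrite /posl /= -(perm_all _ Pc) /= => /andP [-> /andP [] _ ->].
    by [].
  + by apply: (@chi_sorted_b' c b).
  + rewrite /posl (perm_all _ Pb) /= Hpb andbT; by apply: (@chi_x_pos a0 c b).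
  + rewrite (perm_all _ Pb) /= Hall andbT; by apply: (@chi_x_le a0 c b).
  + have Es := perm_sumn Pb; have Ec := perm_sumn Pc; simpl in Es, Ec, Hn |- *; nlia.
  + have Es := perm_size Pb; have Ec := perm_size Pc; simpl in Es, Ec |- *; nlia.
  + by rewrite (@chi_count a0 c b Hs Hsb Hsz2) Hr.
- rewrite /chi /= -/s -/k -/q; by apply: (@psi_chi a0 c b).
Qed.

Lemma count0_nseq (l : seq bool) : count id l = 0 -> l = nseq (size l) false.
Proof.
move=> H; apply: all_false_nseq => j Hj; apply/negP => Hn.
have : has id l by apply/hasP; exists (nth false l j) => //; exact: mem_nth.
by rewrite has_count H.
Qed.

Lemma A0 m n a b : setA 0 m n (a, b) -> phi (a, b) = (a, b) /\ setB 0 m n (a, b).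
Proof.
move=> HA; have := HA.
move/setA_inv => [a0 [c [Ea [[Hs Hp Hsb Hpb Hall] [Hn Hsz Hr]]]]].
have EF : Fk c 0 b = nseq (size b) false by rewrite (count0_nseq Hr) size_Fk.
have HF := Fk_allF EF.
split.
- rewrite Ea /phi /balanced_parts /unbalanced_parts bflags_Fk //= EF mask_false cats0.
  by rewrite map_nseq mask_true // (sorted_sort geq_tr).
- have Hsbc : size b <= size c.
    rewrite leqNgt; apply/negP => Hlt.
    by have := HF _ Hlt; rewrite add0n (nth_default 0 (leqnn _)).
  rewrite /setB Ea; move: HA; rewrite /setA Ea => /and5P [Ha1 Ha2 _ Ha4 /and3P [_ Ha6 _]].
  rewrite Ha1 Ha2 Ha4 muln0 addn0 Ha6 andbT /= andbT /strict_shifted /= ltnS Hsbc /=.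
  apply/allP => i; rewrite mem_iota add1n ltnS => /andP [Hi1 Hi2].
  rewrite /part /=; case: i Hi1 Hi2 => [|i] //= _ Hi.
  by have := HF i Hi.
Qed.

Lemma B0 m n a b : setB 0 m n (a, b) -> setA 0 m n (a, b).
Proof.
rewrite /setB muln0 addn0 => /and5P [/andP [Hs Hp] /andP [Hsb Hpb] /andP [Hlt Hsh] Hn Hsz].
case: a Hs Hp Hlt Hsh Hn Hsz => [|a0 c] // Hs Hp Hlt Hsh Hn /eqP Hsz.
have HF : allF c 0 b.
  move=> j Hj; have Hi : j.+1 \in iota 1 (size b).
    by rewrite mem_iota; apply/andP; split; nlia.
  by have := allP Hsh _ Hi; rewrite /part /=.
apply: setA_intro => //; last first.
- by rewrite (allF_Fk HF) count_nseq_false.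
- exact/eqP.
- apply/allP => y Hy.
  have Hb0 : 0 < size b by case: b Hy {Hsb Hpb Hlt Hsh Hn Hsz HF}.
  have H1 : y <= nth 0 b 0.
    by move: Hy => /(nthP 0) [i Hi <-]; apply: nth_mono Hsb (leq0n _).
  have H2 := HF 0 Hb0; rewrite addn0 in H2.
  have H3 : nth 0 c 0 <= a0.
    by case: c Hs {Hp Hlt Hsh Hn Hsz HF H2} => [|z c] //= /andP [].
  apply: leq_trans (ltnW (leq_ltn_trans H1 H2)) H3.
Qed.

Lemma setB_shift r m n p : setB r (m + 2) n p = setB r.+1 m n p.
Proof.
case: p => a b; rewrite /setB.
by have -> : m + 2 + 2 * r = m + 2 * r.+1 by nlia.
Qed.

Unset Implicit Arguments.
Theorem mainTheorem5 (r m n : nat) :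
  [/\ (forall p, setA r m n p -> setB r m n (phi p)),
      (forall p q, setA r m n p -> setA r m n q -> phi p = phi q -> p = q)
    & (forall q, setB r m n q -> exists2 p, setA r m n p & phi p = q)].
Proof.
elim: r m => [|r IH] m.
- split.
  + by move=> [a b] H; have [E HB] := A0 H; rewrite E.
  + move=> [a b] [a' b'] H H'; have [E _] := A0 H; have [E' _] := A0 H'.
    by rewrite E E'.
  + move=> [a b] H; exists (a, b); first exact: B0.
    by have [E _] := A0 (B0 H).
- have [IH1 IH2 IH3] := IH (m + 2).
  split.
  + move=> [a b] H; have [H1 H2 H3] := psi_setA H.
    by rewrite -H2 -setB_shift; apply: IH1.
  + move=> [a b] [a' b'] H H' E.
    have [H1 H2 H3] := psi_setA H; have [H1' H2' H3'] := psi_setA H'.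
    rewrite -H3 -H3'; congr chi; apply: IH2 => //; by rewrite H2 H2'.
  + move=> q Hq; rewrite -setB_shift in Hq.
    have [[a b] Hp' Ep'] := IH3 q Hq.
    have [Hc Hpc] := chi_setA Hp'.
    case Ec: (chi (a, b)) Hc Hpc => [a1 b1] Hc Hpc.
    exists (a1, b1) => //.
    have [_ H2 _] := psi_setA Hc.
    by rewrite -H2 Hpc.
Qed.
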